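(* Let $n\in\mathbb{N}$ and $m=(n-1)^2+1$. Let $G$ be a finite group of order $mn$ and $H$ a normal subgroup of $G$ of order $n$. Suppose $D$ is an $(mn,(n-1)^2+n,n)$-difference set in $G$ with $H\subseteq D$, and let $R=D\setminus H$. Then (i) $R$ is an $(m,n,m-1,n-2)$-relative difference set in $G$ relative to $H$; (ii) the family $\{hR: h\in H\}$ is an $(n[(n-1)^2+1],n,(n-1)^2,n(n-2),0)$-DPDF and an $(n[(n-1)^2+1],n,(n-1)^2,n(n-1)(n-2),n(n-1)^2)$-EPDF in $G$.
   Context: Groups are written multiplicatively with identity $e$; $G^*=G\setminus\{e\}$; $hR=\{hr:r\in R\}$. For $D\subseteq G$, $\Delta(D)$ is the multiset $\{xy^{-1}: x,y\in D, x\ne y\}$; for $D_1,D_2\subseteq G$, $\Delta(D_1,D_2)$ is the multiset $\{xy^{-1}:x\in D_1,y\in D_2\}$. A $(v,k,\lambda)$-difference set in a group of order $v$ is a $k$-subset $D$ such that $\Delta(D)$ contains each element of $G^*$ exactly $\lambda$ times. If $|G|=mn$ and $H$ is a normal subgroup of order $n$, a $k$-subset $R$ is an $(m,n,k,\lambda)$-relative difference set relative to $H$ if $\Delta(R)$ contains each element of $G\setminus H$ exactly $\lambda$ times and no element of $H\setminus\{e\}$. For a family $A=\{A_1,\dots,A_s\}$ of pairwise disjoint subsets, ${\rm Int}(A)=\bigcup_i\Delta(A_i)$ and ${\rm Ext}(A)=\bigcup_{i\ne j}\Delta(A_i,A_j)$ (multiset unions). For $|G|=v$, a $(v,s,k,\lambda,\mu)$-DPDF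 is a family of $s$ pairwise disjoint $k$-subsets of $G^*$ with union $S$ such that ${\rm Int}(A)$ contains each element of $S$ exactly $\lambda$ times and each element of $G\setminus(S\cup\{e\})$ exactly $\mu$ times; a $(v,s,k,\lambda,\mu)$-EPDF is defined the same way using ${\rm Ext}(A)$. *)

(* Defs.v *)
From mathcomp Require Import all_boot all_order all_fingroup.
Set Implicit Arguments. Unset Strict Implicit. Unset Printing Implicit Defensive.
Local Open Scope group_scope.

Section Diff.
Variable gT : finGroupType.

Definition dcount (D : {set gT}) (g : gT) : nat :=
  #|[set p : gT * gT | [&& p.1 \in D, p.2 \in D, p.1 != p.2 & p.1 * p.2^-1 == g]]|.

Definition dcount2 (D1 D2 : {set gT}) (g : gT) : nat :=
  #|[set p : gT * gT | [&& p.1 \in D1, p.2 \in D2 & p.1 * p.2^-1 == g]]|.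

Definition diff_set (G : {group gT}) (v k lam : nat) (D : {set gT}) : Prop :=
  [/\ #|G| = v, D \subset G, #|D| = k &
      forall g, g \in G -> g != 1 -> dcount D g = lam].

Definition rel_diff_set (G H : {group gT}) (m n k lam : nat) (R : {set gT}) : Prop :=
  [/\ #|G| = (m * n)%N, H <| G, #|H| = n, R \subset G & #|R| = k] /\
  [/\ (forall g, g \in G :\: H -> dcount R g = lam) &
      (forall g, g \in H -> g != 1 -> dcount R g = 0)].

Definition int_count (F : {set {set gT}}) (g : gT) : nat :=
  \sum_(A in F) dcount A g.
Definition ext_count (F : {set {set gT}}) (g : gT) : nat :=
  \sum_(A in F) \sum_(B in F | B != A) dcount2 A B g.

Definition pdf_family (G : {group gT}) (v s k : nat) (F : {set {set gT}}) : Prop :=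
  [/\ #|G| = v, #|F| = s,
      (forall A, A \in F -> A \subset G :\ 1 /\ #|A| = k) &
      (forall A B, A \in F -> B \in F -> A != B -> [disjoint A & B])].

Definition DPDF (G : {group gT}) (v s k lam mu : nat) (F : {set {set gT}}) : Prop :=
  pdf_family G v s k F /\
  forall g, g \in G ->
    (g \in cover F -> int_count F g = lam) /\
    (g \notin cover F -> g != 1 -> int_count F g = mu).

Definition EPDF (G : {group gT}) (v s k lam mu : nat) (F : {set {set gT}}) : Prop :=
  pdf_family G v s k F /\
  forall g, g \in G ->
    (g \in cover F -> ext_count F g = lam) /\
    (g \notin cover F -> g != 1 -> ext_count F g = mu).

End Diff.

(* Main.v *)
Require Import Defs.
From mathcomp Require Import all_boot all_order all_fingroup.
From mathcomp Require Import zify.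
Local Open Scope group_scope.

Lemma dcount2E (gT : finGroupType) (A B : {set gT}) g :
  dcount2 A B g = #|[set y | (y \in B) && (g * y \in A)]|.
Proof.
rewrite /dcount2.
rewrite -(card_in_imset (f := fun y => (g * y, y))
            (D := [set y | (y \in B) && (g * y \in A)])); last first.
  by move=> x y _ _ [].
apply: eq_card => -[x y]; rewrite !inE /=.
apply/idP/imsetP.
- case/and3P => xA yB /eqP <-; exists y; first by rewrite inE yB mulgKV xA.
  by rewrite mulgKV.
- case=> z; rewrite inE => /andP [zB gzA] [-> ->].
  by rewrite gzA zB mulgK eqxx.
Qed.

Lemma dcount_2 (gT : finGroupType) (A : {set gT}) g :
  g != 1 -> dcount A g = dcount2 A A g.
Proof.
move=> hg; rewrite /dcount /dcount2; apply: eq_card => -[x y]; rewrite !inE /=.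
case: (eqVneq x y) => [->|nxy] /=; last by [].
by rewrite mulgV eq_sym (negbTE hg) !andbF.
Qed.

Lemma dcount2_shift (gT : finGroupType) (A B : {set gT}) a b g :
  dcount2 (a *: A) (b *: B) g = dcount2 A B (a^-1 * g * b).
Proof.
rewrite !dcount2E.
rewrite -(card_preimset _ (mulgI b)).
apply: eq_card => y; rewrite !inE !mem_lcoset mulKg.
by rewrite !mulgA.
Qed.

Lemma cardsUd (T : finType) (A B : {set T}) :
  (forall y, y \in A -> y \notin B) -> #|A :|: B| = (#|A| + #|B|)%N.
Proof.
move=> h; rewrite cardsU.
suff ->: A :&: B = set0 by rewrite cards0 subn0.
apply/setP=> y; rewrite !inE; apply/negbTE/negP => /andP[/h /negP]; done.
Qed.

Lemma split4 (gT : finGroupType) (D H R : {set gT}) g :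
  (forall y, (y \in D) = (y \in H) || (y \in R)) ->
  (forall y, ~~ ((y \in H) && (y \in R))) ->
  #|[set y | (y \in D) && ((g * y)%g \in D)]| =
  (#|[set y | (y \in H) && ((g * y)%g \in H)]| + #|[set y | (y \in H) && ((g * y)%g \in R)]|
   + #|[set y | (y \in R) && ((g * y)%g \in H)]| + #|[set y | (y \in R) && ((g * y)%g \in R)]|)%N.
Proof.
move=> hD hd.
have E : [set y | (y \in D) && (g * y \in D)] =
  ([set y | (y \in H) && (g * y \in H)] :|: [set y | (y \in H) && (g * y \in R)]) :|:
  ([set y | (y \in R) && (g * y \in H)] :|: [set y | (y \in R) && (g * y \in R)]).
  apply/setP=> y; rewrite !inE !hD.
  by case: (y \in H); case: (y \in R); case: (g * y \in H); case: (g * y \in R).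
rewrite E !cardsUd ?addnA //.
- move=> y; have := hd y; have := hd (g * y); rewrite !inE.
  by case: (y \in H); case: (y \in R); case: (g * y \in H); case: (g * y \in R).
- move=> y; have := hd y; have := hd (g * y); rewrite !inE.
  by case: (y \in H); case: (y \in R); case: (g * y \in H); case: (g * y \in R).
- move=> y; have := hd y; have := hd (g * y); rewrite !inE.
  by case: (y \in H); case: (y \in R); case: (g * y \in H); case: (g * y \in R).
Qed.

Lemma arith1 k : (0 < k)%N -> (k * (k-2) = k - 2 + (k-1)*(k-2))%N.
Proof. by case: k => // k _; rewrite subn1 /= mulSn. Qed.

Theorem mainTheorem3 (n : nat) (gT : finGroupType) (G H : {group gT}) (D : {set gT}) :
  #|G| = (((n - 1) ^ 2 + 1) * n)%N ->
  H <| G ->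
  #|H| = n ->
  diff_set G (((n - 1) ^ 2 + 1) * n) ((n - 1) ^ 2 + n) n D ->
  H \subset D ->
  let m := ((n - 1) ^ 2 + 1)%N in
  let R := D :\: H in
  rel_diff_set G H m n (m - 1) (n - 2) R /\
  DPDF G (n * ((n - 1) ^ 2 + 1)) n ((n - 1) ^ 2) (n * (n - 2)) 0
       [set h *: R | h in H] /\
  EPDF G (n * ((n - 1) ^ 2 + 1)) n ((n - 1) ^ 2) (n * (n - 1) * (n - 2)) (n * (n - 1) ^ 2)
       [set h *: R | h in H].
Proof.
move=> oG nHG oH [_ sDG oD dD] sHD m R.
have sHG : H \subset G := normal_sub nHG.
have nH : forall x, x \in G -> x \in 'N(H) := fun x xG => subsetP (normal_norm nHG) x xG.
have n_gt0 : (0 < n)%N by rewrite -oH cardG_gt0.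
have hDe : forall y, (y \in D) = (y \in H) || (y \in R).
  move=> y; rewrite /R !inE; case yH: (y \in H) => //=; by rewrite (subsetP sHD).
have hHR : forall y, ~~ ((y \in H) && (y \in R)).
  by move=> y; rewrite /R !inE; case: (y \in H).
have RnH : forall r, r \in R -> r \notin H.
  by move=> r; rewrite /R inE => /andP[].
have sRG : R \subset G by apply: subset_trans (subsetDl D H) sDG.
have RG : forall r, r \in R -> r \in G := fun r rR => subsetP sRG r rR.
have HG : forall r, r \in H -> r \in G := fun r rR => subsetP sHG r rR.
have oR : #|R| = ((n-1)^2)%N.
  rewrite /R cardsD (setIidPr sHD) oD oH; lia.
clearbody R.
pose T (B A : {set gT}) g := #|[set y | (y \in B) && ((g * y)%g \in A)]|.
pose c g := T R R g.
have dc : forall g, g != 1 -> dcount D g = (T H H g + T H R g + T R H g + c g)%N.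
  move=> g g1; rewrite dcount_2 // dcount2E; exact: split4.
have THH_in : forall g, g \in H -> T H H g = n.
  move=> g gH; rewrite /T -oH; apply: eq_card => y; rewrite !inE groupMl //.
  by case: (y \in H).
have THR_in : forall g, g \in H -> T H R g = 0%N.
  move=> g gH; apply: eq_card0 => y; rewrite !inE.
  apply/negP => /andP[yH gyR]; move: (hHR (g * y)); rewrite gyR groupM //.
have TRH_in : forall g, g \in H -> T R H g = 0%N.
  move=> g gH; apply: eq_card0 => y; rewrite !inE.
  apply/negP => /andP[yR gyH]; move: gyH; rewrite groupMl // => yH.
  by move: (hHR y); rewrite yH yR.
have F1 : forall g, g \in H -> g != 1 -> c g = 0%N.
  move=> g gH g1; have := dD g (HG g gH) g1; rewrite dc // THH_in // THR_in // TRH_in //.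
  lia.
have F3 : forall x y, x \in R -> y \in R -> y * x^-1 \in H -> x = y.
  move=> x y xR yR aH; case: (eqVneq x y) => // nxy.
  have a1 : y * x^-1 != 1 by rewrite -eq_mulgV1 eq_sym.
  have := F1 _ aH a1; rewrite /c /T => /eqP; rewrite cards_eq0 => /eqP/setP/(_ x).
  by rewrite !inE xR mulgKV yR.
have F4 : forall g, g \in G -> g \notin H -> exists2 h, h \in H & exists2 r, r \in R & g = h * r.
  move=> g gG gH.
  pose HR := [set p.1 * p.2 | p in setX H R].
  have inj : {in setX H R &, injective (fun p : gT * gT => p.1 * p.2)}.
    move=> [h1 r1] [h2 r2]; rewrite !inE /= => /andP[h1H r1R] /andP[h2H r2R] e.
    have e1 : r1 = h1^-1 * (h2 * r2) by rewrite -e mulKg.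
    have er : r2 = r1.
      apply: F3 => //; rewrite e1 mulgA mulgK groupM ?groupV //.
    subst r2; congr pair; exact: (mulIg r1).
  have cHR : #|HR| = (n * (n-1)^2)%N by rewrite card_in_imset // cardsX oH oR.
  have sHR : HR \subset G :\: H.
    apply/subsetP => x /imsetP [[h r]]; rewrite inE /= => /andP [hH rR] ->.
    rewrite !inE (groupMl _ hH) RnH //=; apply: groupM; [exact: HG | exact: RG].
  have eHR : HR = G :\: H.
    apply/eqP; rewrite eqEcard sHR /= cHR cardsD (setIidPr sHG) oG oH.
    by rewrite mulnDl mul1n addnK mulnC.
  have : g \in HR by rewrite eHR !inE gH gG.
  case/imsetP => -[h r]; rewrite inE /= => /andP [hH rR] ->.
  by exists h => //; exists r.
have THH_out : forall g, g \notin H -> T H H g = 0%N.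
  move=> g gH; apply: eq_card0 => y; rewrite !inE.
  apply/negP => /andP[yH gyH]; move: gyH; rewrite groupMr //; exact/negP.
have conjH : forall x y, x \in G -> y \in H -> x^-1 * (y * x) \in H.
  by move=> x y xG yH; rewrite -conjgE memJ_norm // nH.
have THR_out : forall g, g \in G -> g \notin H -> T H R g = 1%N.
  move=> g gG gH; have [h hH [r rR eg]] := F4 g gG gH.
  apply: (@eq_card1 _ (r^-1 * (h^-1 * r))) => y; rewrite !inE.
  apply/idP/eqP.
  - case/andP => yH gyR.
    have y0H : r^-1 * (h^-1 * r) \in H by apply: conjH; [exact: RG | rewrite groupV].
    have g0R : g * (r^-1 * (h^-1 * r)) \in R by rewrite eg -mulgA !mulKVg.
    have := F3 _ _ g0R gyR.
    have -> : g * y * (g * (r^-1 * (h^-1 * r)))^-1 =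
              (g^-1)^-1 * ((y * (r^-1 * (h^-1 * r))^-1) * g^-1).
      by rewrite invgK invMg !mulgA.
    move=> /(_ (conjH _ _ (groupVr gG) (groupM yH (groupVr y0H)))) e.
    by apply: (mulgI g); rewrite e.
  - move=> ->; rewrite eg -mulgA !mulKVg rR andbT.
    by apply: conjH; [exact: RG | rewrite groupV].
have TRH_out : forall g, g \in G -> g \notin H -> T R H g = 1%N.
  move=> g gG gH; have gVH : g^-1 \notin H by rewrite groupV.
  have [h hH [r rR eg]] := F4 g^-1 (groupVr gG) gVH.
  apply: (@eq_card1 _ r) => y; rewrite !inE.
  have grH : g * r \in H.
    have -> : g = (h * r)^-1 by rewrite -eg invgK.
    by rewrite invMg -mulgA; apply: conjH; [exact: RG | rewrite groupV].
  apply/idP/eqP.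
  - case/andP => yR gyH.
    apply: esym; apply: F3 => //.
    have -> : y * r^-1 = (r^-1)^-1 * ((y^-1 * r)^-1 * r^-1).
      by rewrite !invgK invMg invgK !mulgA mulgV mul1g.
    apply: conjH; first by rewrite groupV RG.
    rewrite groupV.
    have -> : y^-1 * r = (g * y)^-1 * (g * r) by rewrite invMg -mulgA mulKg.
    by rewrite groupM ?groupV.
  - by move=> ->; rewrite rR grH.
have F2 : forall g, g \in G -> g \notin H -> c g = (n - 2)%N.
  move=> g gG gH; have g1 : g != 1 by apply: contraNneq gH => ->.
  have := dD g gG g1; rewrite dc // THH_out // THR_out // TRH_out //.
  lia.
have c1 : c 1 = ((n-1)^2)%N.
  by rewrite -oR /c /T; apply: eq_card => y; rewrite !inE mul1g andbb.
have d2R : forall a b g, dcount2 (a *: R) (b *: R) g = c (a^-1 * g * b).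
  by move=> a b g; rewrite dcount2_shift dcount2E.
have dR : forall h g, g != 1 -> dcount (h *: R) g = c (h^-1 * g * h).
  by move=> h g g1; rewrite dcount_2 // d2R.
have mH : forall a b g, a \in H -> b \in H -> (a^-1 * g * b \in H) = (g \in H).
  by move=> a b g aH bH; rewrite groupMr // groupMl // groupV.
have mG : forall a b g, a \in H -> b \in H -> g \in G -> a^-1 * g * b \in G.
  by move=> a b g aH bH gG; apply: groupM; [apply: groupM; [rewrite groupV; exact: HG | done] | exact: HG].
set F := [set h *: R | h in H].
have finj : {in H &, injective (fun h => h *: R)}.
  move=> h1 h2 h1H h2H /= e.
  case: (set_0Vmem R) => [R0 | [r rR]].
    have : (#|H| <= 1)%N by move: oR; rewrite R0 cards0 oH; lia.
    by move/card_le1_eqP => /(_ h2 h1 h2H h1H).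
  have r1 : h1 * r \in h2 *: R by rewrite -e mem_lcoset mulKg.
  move: r1; rewrite mem_lcoset => r'R.
  have := F3 r _ rR r'R.
  rewrite mulgA mulgK groupM ?groupV // => /(_ isT) er.
  by apply: (mulIg r); rewrite /= [in RHS]er -mulgA mulKVg.
have coverF : forall g, (g \in cover F) = (g \in G) && (g \notin H).
  move=> g; apply/bigcupP/andP.
  - case=> A /imsetP [h hH ->] /lcosetP [r rR ->].
    split; first by apply: groupM; [exact: HG | exact: RG].
    by rewrite groupMl // RnH.
  - case=> gG gH; have [h hH [r rR ->]] := F4 g gG gH.
    exists (h *: R); first exact: imset_f.
    by apply/lcosetP; exists r.
have pdf : pdf_family G (n * ((n - 1) ^ 2 + 1)) n ((n - 1) ^ 2) F.
  split.
  - by rewrite oG mulnC.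
  - by rewrite card_in_imset.
  - move=> A /imsetP [h hH ->]; split; last by rewrite card_lcoset oR.
    apply/subsetP => x /lcosetP [r rR ->]; rewrite !inE (groupM (HG _ hH) (RG _ rR)) andbT.
    apply/eqP => e; have : r \in H by rewrite -(mulKg h r) e mulg1 groupV.
    by rewrite (negbTE (RnH r rR)).
  - move=> A B /imsetP [h1 h1H ->] /imsetP [h2 h2H ->] ne.
    rewrite -setI_eq0; apply/eqP/setP => x; rewrite !inE.
    apply/negbTE/negP => /andP [/lcosetP [r1 r1R ->] /lcosetP [r2 r2R e]].
    have er : r2 = r1.
      apply: F3 => //.
      have -> : r1 = h1^-1 * (h2 * r2) by rewrite -e mulKg.
      by rewrite mulgA mulgK groupM ?groupV.
    subst r2; move: ne; rewrite (mulIg r1 _ _ e) eqxx //.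
have dRc : forall g, g != 1 -> dcount R g = c g.
  by move=> g g1; rewrite dcount_2 // dcount2E.
split.
  split; first by split => //; rewrite oR /m addnK.
  split.
  - move=> g; rewrite inE => /andP [gH gG].
    rewrite dRc ?F2 //; by apply: contraNneq gH => ->.
  - by move=> g gH g1; rewrite dRc ?F1.
split.
  split => // g gG; split.
  - rewrite coverF gG /= => gH.
    have g1 : g != 1 by apply: contraNneq gH => ->.
    rewrite /int_count big_imset //= (eq_bigr (fun _ => (n - 2)%N)) ?sum_nat_const ?oH //.
    by move=> h hH; rewrite dR // F2 ?mG ?mH.
  - rewrite coverF gG /= negbK => gH g1.
    rewrite /int_count big_imset //= big1 // => h hH.
    rewrite dR // F1 ?mH //.
    by rewrite -mulgA -conjgE conjg_eq1.
split => // g gG; split.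
- rewrite coverF gG /= => gH.
  rewrite /ext_count big_imset //=.
  rewrite (eq_bigr (fun _ => ((n-1) * (n-2))%N)) ?sum_nat_const ?oH ?mulnA //.
  move=> h1 h1H.
  have hs : (\sum_(B in F) dcount2 (h1 *: R) B g =
     dcount2 (h1 *: R) (h1 *: R) g + \sum_(B in F | B != h1 *: R) dcount2 (h1 *: R) B g)%N.
    rewrite (bigD1 (h1 *: R)) //; exact: imset_f.
  apply/eqP; rewrite -(eqn_add2l (dcount2 (h1 *: R) (h1 *: R) g)) -hs; apply/eqP.
  rewrite big_imset //= (eq_bigr (fun _ => (n - 2)%N)) ?sum_nat_const ?oH.
    rewrite d2R F2 ?mG ?mH //.
    exact: arith1.
  by move=> h hH; rewrite d2R F2 ?mG ?mH.
- rewrite coverF gG /= negbK => gH g1.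
  rewrite /ext_count big_imset //=.
  rewrite (eq_bigr (fun _ => ((n-1)^2)%N)) ?sum_nat_const ?oH //.
  move=> h1 h1H.
  have hs : (\sum_(B in F) dcount2 (h1 *: R) B g =
     dcount2 (h1 *: R) (h1 *: R) g + \sum_(B in F | B != h1 *: R) dcount2 (h1 *: R) B g)%N.
    rewrite (bigD1 (h1 *: R)) //; exact: imset_f.
  apply/eqP; rewrite -(eqn_add2l (dcount2 (h1 *: R) (h1 *: R) g)) -hs; apply/eqP.
  rewrite d2R F1 ?mH //; last by rewrite -mulgA -conjgE conjg_eq1.
  rewrite big_imset //= (bigD1 (g^-1 * h1)) /=; last by rewrite groupM ?groupV.
  rewrite d2R (_ : h1^-1 * g * (g^-1 * h1) = 1) ?c1; last by rewrite mulgA mulgK mulVg.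
  rewrite big1 ?addn0 // => h2 /andP [h2H ne].
  rewrite d2R F1 ?mH //.
  apply: contra ne => /eqP e; apply/eqP.
  by rewrite -[h2](mulKg (h1^-1 * g)) e mulg1 invMg invgK.
Qed.
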